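(* Let $\Pi=(\mathsf A,\mathsf B)$ be a protocol and $z\in\mathbb N$. Then (1) $C^{\mathsf A,z}_\Pi$ is a measure over the $1$-leaves of $\Pi$: $C^{\mathsf A,z}_\Pi(\ell)\in[0,1]$ for every leaf $\ell$, and $C^{\mathsf A,z}_\Pi(\ell)=0$ whenever $\chi_\Pi(\ell)=0$; and (2) $\mathbb E_{\ell\leftarrow L_\Pi}[C^{\mathsf A,z}_\Pi(\ell)]=\sum_{j=0}^{z}\alpha_j\prod_{t=0}^{j-1}(1-\beta_t)(1-\alpha_t)$, where $\alpha_j=1-\mathrm{Best}_{\mathsf B}(\Pi_{(\mathsf A,j)})$, $\beta_j=1-\mathrm{Best}_{\mathsf A}(\Pi_{(\mathsf B,j)})$, and $\mathrm{Best}_{\mathsf A}(\perp)=\mathrm{Best}_{\mathsf B}(\perp)=1$.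
   Context: Protocols are $m$-round single-bit-message protocols identified with the complete binary tree of height $m$, with control scheme, edge probabilities $e_\Pi(u,ub)$, output $\chi_\Pi:\text{leaves}\to\{0,1\}$, visit probabilities $v_\Pi(u)$, leaf distribution $L_\Pi$; $\Pi_u$ is the subprotocol under node $u$ (or $\perp$ if $v_\Pi(u)=0$); expectations over $L_\perp$ are $0$; $\mathbb E_{L_{\Pi_u}}[M]$ is the expectation of the restriction of $M$ to leaves under $u$. $\mathsf A$-dominated measure $M^{\mathsf A}_\Pi$: for a 0-round protocol with leaf $\ell$, $M^{\mathsf A}_\Pi(\ell)=\chi_\Pi(\ell)$; otherwise for a leaf with first bit $b$, with $\mu_c=\mathbb E_{L_{\Pi_c}}[M^{\mathsf A}_{\Pi_c}]$: value $0$ if $e_\Pi(\lambda,b)=0$; $M^{\mathsf A}_{\Pi_b}(\ell)$ if $e_\Pi(\lambda,b)=1$, or if $e_\Pi(\lambda,b)\in(0,1)$ and ($\mathsf A$ controls the root or $\mu_b\le\mu_{1-b}$); $\frac{\mu_{1-b}}{\mu_b}M^{\mathsf A}_{\Pi_b}(\ell)$ otherwise. The $\mathsf B$-dominated measure $M^{\mathsf B}_\Pi$ is defined identically with $\mathsf A,\mathsf B$ exchanged and with base case $M^{\mathsf B}_\Pi(\ell)=1-\chi_\Pi(\ell)$. $M^{\mathsf A}_\perp,M^{\mathsf B}_\perp$ are the zero measure. Conditional protocol: for $\mathbb E_{L_\Pi}[M]<1$, $\Pi|_M$ has the same control and output and $e_{\Pi|_M}(u,ub)=0$ if $\mathbb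 E_{L_{\Pi_u}}[M]=1$, else $e_\Pi(u,ub)\frac{1-\mathbb E_{L_{\Pi_{ub}}}[M]}{1-\mathbb E_{L_{\Pi_u}}[M]}$; if $\mathbb E_{L_\Pi}[M]=1$ or $\Pi=\perp$, $\Pi|_M=\perp$. Sequence: $\Pi_{(\mathsf A,0)}=\Pi$, $\Pi_{(\mathsf B,j)}=\Pi_{(\mathsf A,j)}|_{M^{\mathsf A}_{\Pi_{(\mathsf A,j)}}}$, $\Pi_{(\mathsf A,j+1)}=\Pi_{(\mathsf B,j)}|_{M^{\mathsf B}_{\Pi_{(\mathsf B,j)}}}$. $C^{\mathsf A,z}_\Pi=\sum_{j=0}^z M^{\mathsf A}_{\Pi_{(\mathsf A,j)}}\prod_{t=0}^{j-1}(1-M^{\mathsf A}_{\Pi_{(\mathsf A,t)}})$ (pointwise on leaves). Valid attackers: deterministic strategies that never reach nodes unreachable in the honest protocol; $\mathrm{Best}_{\mathsf A}(\Pi')$ is the max over valid $\mathsf A'$ of the expected output of $(\mathsf A',\mathsf B)$, and $\mathrm{Best}_{\mathsf B}(\Pi')$ is the max over valid $\mathsf B'$ of $1$ minus the expected output of $(\mathsf A,\mathsf B')$. *)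

(* Defs.v *)
From HB Require Import structures.
From mathcomp Require Import all_boot all_order all_algebra.
From mathcomp Require Import boolp classical_sets reals.
Set Implicit Arguments. Unset Strict Implicit. Unset Printing Implicit Defensive.
Import Order.TTheory GRing.Theory Num.Theory.
Local Open Scope ring_scope.
Local Open Scope classical_set_scope.

Inductive party := PartyA | PartyB.

Definition party_eqb (p q : party) : bool :=
  match p, q with PartyA, PartyA | PartyB, PartyB => true | _, _ => false end.

Section Protocols.
Variable R : realType.

(* An m-round single-bit-message protocol = complete binary tree of height m.
   [Node c e0 e1 t0 t1] : root controlled by [c], e0 = e(root, 0), e1 = e(root,1),
   t0/t1 = subtrees under children 0/1.  [Leaf b] : 0-round protocol with output b.
   Nodes/leaves are addressed by bit strings (seq bool), leaves of a [proto m]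
   being the strings of length m. *)
Inductive proto : nat -> Type :=
| Leaf : bool -> proto 0
| Node : forall m, party -> R -> R -> proto m -> proto m -> proto m.+1.

Fixpoint valid_proto m (t : proto m) : Prop :=
  match t with
  | Leaf _ => True
  | Node _ _ e0 e1 t0 t1 =>
      [/\ 0 <= e0, 0 <= e1, e0 + e1 = 1, valid_proto t0 & valid_proto t1]
  end.

Definition measure := seq bool -> R.
Definition restr (M : measure) (b : bool) : measure := fun l => M (b :: l).

Fixpoint chi m (t : proto m) (l : seq bool) : bool :=
  match t with
  | Leaf c => c
  | Node _ _ _ _ t0 t1 =>
      match l with [::] => false | b :: l' => if b then chi t1 l' else chi t0 l' end
  end.

Fixpoint expect m (t : proto m) (M : measure) : R :=
  match t with
  | Leaf _ => M [::]
  | Node _ _ e0 e1 t0 t1 => e0 * expect t0 (restr M false) + e1 * expect t1 (restr M true)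
  end.

Fixpoint dom_measure (P : party) m (t : proto m) : measure :=
  match t with
  | Leaf c => fun _ => if P is PartyA then (c : nat)%:R else ((~~ c) : nat)%:R
  | Node _ q e0 e1 t0 t1 =>
      let M0 := dom_measure P t0 in
      let M1 := dom_measure P t1 in
      (* mu_c = E_{L_{Pi_c}}[M^P_{Pi_c}], with Pi_c = bot (expectation 0) if e(root,c)=0 *)
      let mu0 := if e0 == 0 then 0 else expect t0 M0 in
      let mu1 := if e1 == 0 then 0 else expect t1 M1 in
      fun l =>
        match l with
        | [::] => 0
        | b :: l' =>
          let eb := if b then e1 else e0 in
          let Mb := if b then M1 else M0 in
          let mub := if b then mu1 else mu0 in
          let muo := if b then mu0 else mu1 in
          if eb == 0 then 0
          else if eb == 1 then Mb l'
          else if (0 < eb < 1) && (party_eqb q P || (mub <= muo)) then Mb l'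
          else muo / mub * Mb l'
        end
  end.

(* conditional protocol; the flag [r] records whether the current node is
   reachable (visit probability <> 0) in the original protocol; expectations
   over L_bot are 0. *)
Fixpoint cond_aux (r : bool) m (t : proto m) (M : measure) : proto m :=
  match t with
  | Leaf c => Leaf c
  | Node _ q e0 e1 t0 t1 =>
      let Eu := if r then expect t M else 0 in
      let r0 := r && (e0 != 0) in
      let r1 := r && (e1 != 0) in
      let E0 := if r0 then expect t0 (restr M false) else 0 in
      let E1 := if r1 then expect t1 (restr M true) else 0 in
      Node q (if Eu == 1 then 0 else e0 * (1 - E0) / (1 - Eu))
             (if Eu == 1 then 0 else e1 * (1 - E1) / (1 - Eu))
             (cond_aux r0 t0 (restr M false)) (cond_aux r1 t1 (restr M true))
  end.

(* protocols-or-bot are [option (proto m)], None = bot *)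
Definition cond m (o : option (proto m)) (M : measure) : option (proto m) :=
  match o with
  | None => None
  | Some t => if expect t M == 1 then None else Some (cond_aux true t M)
  end.

Definition dom_measure_o (P : party) m (o : option (proto m)) : measure :=
  match o with None => fun _ => 0 | Some t => dom_measure P t end.

Fixpoint proto_seq m (t : proto m) (j : nat) : option (proto m) * option (proto m) :=
  let PiA := match j with
             | 0 => Some t
             | j'.+1 => let PiB := (proto_seq t j').2 in
                        cond PiB (dom_measure_o PartyB PiB)
             end in
  (PiA, cond PiA (dom_measure_o PartyA PiA)).

Definition PiA m (t : proto m) j := (proto_seq t j).1.
Definition PiB m (t : proto m) j := (proto_seq t j).2.

Definition CA m (t : proto m) (z : nat) : measure := fun l =>
  \sum_(j < z.+1) dom_measure_o PartyA (PiA t j) l *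
                  \prod_(i < j) (1 - dom_measure_o PartyA (PiA t i) l).

(* Attacks: a deterministic strategy for the cheating party P maps each node
   (bit string) to the bit it sends there. [attack_out P S t] is the expected
   output of the protocol where P plays S and the other party is honest. *)
Definition strategy := seq bool -> bool.
Definition sshift (S : strategy) (b : bool) : strategy := fun u => S (b :: u).

Fixpoint attack_out (P : party) (S : strategy) m (t : proto m) : R :=
  match t with
  | Leaf c => (c : nat)%:R
  | Node _ q e0 e1 t0 t1 =>
      if party_eqb q P then
        (if S [::] then attack_out P (sshift S true) t1 else attack_out P (sshift S false) t0)
      else e0 * attack_out P (sshift S false) t0 + e1 * attack_out P (sshift S true) t1
  end.

Fixpoint valid_attack (P : party) (S : strategy) m (t : proto m) : Prop :=
  match t with
  | Leaf _ => True
  | Node _ q e0 e1 t0 t1 =>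
      if party_eqb q P then
        (if S [::] then e1 != 0 /\ valid_attack P (sshift S true) t1
                   else e0 != 0 /\ valid_attack P (sshift S false) t0)
      else (e0 != 0 -> valid_attack P (sshift S false) t0) /\
           (e1 != 0 -> valid_attack P (sshift S true) t1)
  end.

(* Best_A: max expected output; Best_B: max of 1 - expected output
   (the max is attained, so sup = max) *)
Definition Best (P : party) m (t : proto m) : R :=
  sup [set x | exists S : strategy, valid_attack P S t /\
        x = (if P is PartyA then attack_out P S t else 1 - attack_out P S t)].

Definition Best_o (P : party) m (o : option (proto m)) : R :=
  match o with None => 1 | Some t => Best P t end.

Definition alpha m (t : proto m) j : R := 1 - Best_o PartyB (PiA t j).
Definition beta m (t : proto m) j : R := 1 - Best_o PartyA (PiB t j).

End Protocols.

(* Main.v *)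
Require Import Defs.
From HB Require Import structures.
From mathcomp Require Import all_boot all_order all_algebra.
From mathcomp Require Import boolp classical_sets reals.
From mathcomp Require Import ring lra.
Set Implicit Arguments. Unset Strict Implicit. Unset Printing Implicit Defensive.
Import Order.TTheory GRing.Theory Num.Theory.
Local Open Scope ring_scope.

Fixpoint rv (R : realType) m (t : proto R m) : Prop :=
  match t with
  | Leaf _ => True
  | Node _ _ e0 e1 t0 t1 =>
      [/\ 0 <= e0, 0 <= e1, e0 + e1 = 1, (e0 != 0 -> rv t0) & (e1 != 0 -> rv t1)]
  end.

Lemma valid_rv (R : realType) m (t : proto R m) : valid_proto t -> rv t.
Proof.
elim: t => [c|n q e0 e1 t0 IH0 t1 IH1] //= [h0 h1 h2 v0 v1].
by split=> // _; [apply: IH0|apply: IH1].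
Qed.

Lemma expect_add (R : realType) m (t : proto R m) (M N : measure R) :
  expect t (fun l => M l + N l) = expect t M + expect t N.
Proof.
elim: t M N => [c|n q e0 e1 t0 IH0 t1 IH1] M N //=.
rewrite /restr /= (IH0 (fun l => M (false :: l)) (fun l => N (false :: l))).
rewrite (IH1 (fun l => M (true :: l)) (fun l => N (true :: l))).
rewrite /restr; ring.
Qed.

Lemma expect0 (R : realType) m (t : proto R m) :
  expect t (fun _ => 0) = 0.
Proof.
elim: t => [c|n q e0 e1 t0 IH0 t1 IH1] //=.
by rewrite /restr IH0 IH1 !mulr0 addr0.
Qed.

Lemma expect_ge0 (R : realType) m (t : proto R m) (M : measure R) :
  rv t -> (forall l, 0 <= M l) -> 0 <= expect t M.
Proof.
elim: t M => [c|n q e0 e1 t0 IH0 t1 IH1] M //=.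
move=> [h0 h1 h2 v0 v1] hM.
apply: addr_ge0.
  have [->|nz] := eqVneq e0 0; first by rewrite mul0r.
  by apply: mulr_ge0 => //; apply: IH0; [exact: v0|move=> l; apply: hM].
have [->|nz] := eqVneq e1 0; first by rewrite mul0r.
by apply: mulr_ge0 => //; apply: IH1; [exact: v1|move=> l; apply: hM].
Qed.

Lemma expect_le1 (R : realType) m (t : proto R m) (M : measure R) :
  rv t -> (forall l, M l <= 1) -> expect t M <= 1.
Proof.
elim: t M => [c|n q e0 e1 t0 IH0 t1 IH1] M //=.
move=> [h0 h1 h2 v0 v1] hM.
have A0 : e0 * expect t0 (restr M false) <= e0.
  have [->|nz] := eqVneq e0 0; first by rewrite mul0r.
  rewrite -[leRHS]mulr1; apply: ler_wpM2l => //; apply: IH0; [exact: v0|move=> l; apply: hM].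
have A1 : e1 * expect t1 (restr M true) <= e1.
  have [->|nz] := eqVneq e1 0; first by rewrite mul0r.
  rewrite -[leRHS]mulr1; apply: ler_wpM2l => //; apply: IH1; [exact: v1|move=> l; apply: hM].
lra.
Qed.

Lemma mul_le_self (R : realType) (e E : R) : 0 <= e -> (e != 0 -> E <= 1) -> e * E <= e.
Proof.
move=> he hE; have [->|nz] := eqVneq e 0; first by rewrite mul0r.
by rewrite -[leRHS]mulr1; apply: ler_wpM2l => //; apply: hE.
Qed.

Lemma force_one (R : realType) (e0 e1 E0 E1 : R) :
  0 <= e0 -> 0 <= e1 -> e0 + e1 = 1 -> e0 * E0 + e1 * E1 = 1 ->
  (e0 != 0 -> E0 <= 1) -> (e1 != 0 -> E1 <= 1) -> e0 != 0 -> E0 = 1.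
Proof.
move=> h0 h1 h2 hE b0 b1 nz.
have A1 := mul_le_self h1 b1.
have p0 : 0 < e0 by rewrite lt_def nz h0.
apply: le_anti; rewrite b0 //=.
by rewrite -(ler_pM2l p0) mulr1; lra.
Qed.

Lemma expect_one_zero (R : realType) m (t : proto R m) (M f : measure R) :
  rv t -> (forall l, M l <= 1) -> expect t M = 1 ->
  expect t (fun l => (1 - M l) * f l) = 0.
Proof.
elim: t M f => [c|n q e0 e1 t0 IH0 t1 IH1] M f /=.
  by move=> _ _ ->; rewrite subrr mul0r.
move=> [h0 h1 h2 v0 v1] hM hE.
have b0 : e0 != 0 -> expect t0 (restr M false) <= 1.
  by move=> nz; apply: expect_le1; [exact: v0|move=> l; apply: hM].
have b1 : e1 != 0 -> expect t1 (restr M true) <= 1.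
  by move=> nz; apply: expect_le1; [exact: v1|move=> l; apply: hM].
have o0 : e0 != 0 -> expect t0 (restr M false) = 1.
  exact: (force_one h0 h1 h2 hE b0 b1).
have o1 : e1 != 0 -> expect t1 (restr M true) = 1.
  move=> nz; rewrite addrC in hE; apply: (force_one h1 h0 _ hE b1 b0 nz).
  by rewrite addrC.
rewrite -[RHS]addr0; congr (_ + _).
  have [->|nz] := eqVneq e0 0; first by rewrite mul0r.
  rewrite (IH0 (restr M false) (restr f false)) ?mulr0 //; first exact: v0.
    by move=> l; apply: hM.
  exact: o0.
have [->|nz] := eqVneq e1 0; first by rewrite mul0r.
rewrite (IH1 (restr M true) (restr f true)) ?mulr0 //; first exact: v1.
  by move=> l; apply: hM.
exact: o1.
Qed.

Lemma cond_expect (R : realType) m (t : proto R m) (M f : measure R) :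
  rv t -> (forall l, 0 <= M l <= 1) -> expect t M != 1 ->
  (1 - expect t M) * expect (cond_aux true t M) f =
  expect t (fun l => (1 - M l) * f l).
Proof.
elim: t M f => [c|n q e0 e1 t0 IH0 t1 IH1] M f //=.
move=> [h0 h1 h2 v0 v1] hM hE; rewrite (negbTE hE).
set Eu := _ + _ in hE *.
have hu : 1 - Eu != 0 by rewrite subr_eq0 eq_sym.
rewrite mulrDr; congr (_ + _).
  have [->|nz] := eqVneq e0 0; first by rewrite !mul0r mulr0.
  rewrite /=.
  have -> : (1 - Eu) * (e0 * (1 - expect t0 (restr M false)) / (1 - Eu) *
     expect (cond_aux true t0 (restr M false)) (restr f false)) =
     e0 * ((1 - expect t0 (restr M false)) * expect (cond_aux true t0 (restr M false)) (restr f false)).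
    by field.
  congr (_ * _).
  have [E1|En] := eqVneq (expect t0 (restr M false)) 1.
    rewrite E1 subrr mul0r; symmetry.
    apply: (expect_one_zero (M:=restr M false) (restr f false) (v0 nz) _ E1) => l.
    by case/andP: (hM (false :: l)).
  by apply: IH0 => //; [exact: v0| move=> l; apply: hM].
have [->|nz] := eqVneq e1 0; first by rewrite !mul0r mulr0.
rewrite /=.
have -> : (1 - Eu) * (e1 * (1 - expect t1 (restr M true)) / (1 - Eu) *
   expect (cond_aux true t1 (restr M true)) (restr f true)) =
   e1 * ((1 - expect t1 (restr M true)) * expect (cond_aux true t1 (restr M true)) (restr f true)).
  by field.
congr (_ * _).
have [E1|En] := eqVneq (expect t1 (restr M true)) 1.
  rewrite E1 subrr mul0r; symmetry.
  apply: (expect_one_zero (M:=restr M true) (restr f true) (v1 nz) _ E1) => l.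
    by case/andP: (hM (true :: l)).
by apply: IH1 => //; [exact: v1| move=> l; apply: hM].
Qed.

Lemma cond_chi (R : realType) m (t : proto R m) r (M : measure R) l :
  chi (cond_aux r t M) l = chi t l.
Proof.
elim: t r M l => [c|n q e0 e1 t0 IH0 t1 IH1] r M l //=.
by case: l => [|[] l'] //.
Qed.

Lemma cond_rv (R : realType) m (t : proto R m) (M : measure R) :
  rv t -> (forall l, 0 <= M l <= 1) -> expect t M != 1 ->
  rv (cond_aux true t M).
Proof.
elim: t M => [c|n q e0 e1 t0 IH0 t1 IH1] M //=.
move=> [h0 h1 h2 v0 v1] hM hE; rewrite (negbTE hE).
set Eu := _ + _ in hE *.
have hle : Eu <= 1.
  have hr : rv (Node q e0 e1 t0 t1) by split.
  have hb : forall l, M l <= 1 by move=> l; case/andP: (hM l).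
  exact: (expect_le1 hr hb).
have hlt : 0 < 1 - Eu by rewrite subr_gt0 lt_neqAle hE hle.
have B0 : e0 != 0 -> expect t0 (restr M false) <= 1.
  move=> nz; apply: expect_le1; [exact: v0| move=> l; by case/andP: (hM (false :: l))].
have B1 : e1 != 0 -> expect t1 (restr M true) <= 1.
  move=> nz; apply: expect_le1; [exact: v1| move=> l; by case/andP: (hM (true :: l))].
have P0 : 0 <= e0 * (1 - (if e0 != 0 then expect t0 (restr M false) else 0)) / (1 - Eu).
  apply: divr_ge0; last exact: ltW.
  have [->|nz] := eqVneq e0 0; first by rewrite mul0r.
  by apply: mulr_ge0 => //=; rewrite subr_ge0; apply: B0.
have P1 : 0 <= e1 * (1 - (if e1 != 0 then expect t1 (restr M true) else 0)) / (1 - Eu).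
  apply: divr_ge0; last exact: ltW.
  have [->|nz] := eqVneq e1 0; first by rewrite mul0r.
  by apply: mulr_ge0 => //=; rewrite subr_ge0; apply: B1.
have Q0 : e0 * (if e0 != 0 then expect t0 (restr M false) else 0) = e0 * expect t0 (restr M false).
  by have [->|nz] := eqVneq e0 0; rewrite ?mul0r.
have Q1 : e1 * (if e1 != 0 then expect t1 (restr M true) else 0) = e1 * expect t1 (restr M true).
  by have [->|nz] := eqVneq e1 0; rewrite ?mul0r.
split => //.
- rewrite -mulrDl !mulrBr !mulr1 Q0 Q1.
  have -> : e0 - e0 * expect t0 (restr M false) + (e1 - e1 * expect t1 (restr M true)) = 1 - Eu.
    rewrite /Eu; lra.
  by rewrite divff // gt_eqF.
- have [->|nz] := eqVneq e0 0; first by rewrite !mul0r eqxx.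
  rewrite /=.
  have [->|En] := eqVneq (expect t0 (restr M false)) 1; first by rewrite subrr mulr0 mul0r eqxx.
  move=> _; apply: IH0 => //; [exact: v0| move=> l; exact: hM].
- have [->|nz] := eqVneq e1 0; first by rewrite !mul0r eqxx.
  rewrite /=.
  have [->|En] := eqVneq (expect t1 (restr M true)) 1; first by rewrite subrr mulr0 mul0r eqxx.
  move=> _; apply: IH1 => //; [exact: v1| move=> l; exact: hM].
Qed.

Definition coef (R : realType) (eb mub muo : R) (c : bool) : R :=
  if eb == 0 then 0 else if eb == 1 then 1
  else if (0 < eb < 1) && (c || (mub <= muo)) then 1 else muo / mub.

Definition mu (R : realType) P n (e : R) (t : proto R n) : R :=
  if e == 0 then 0 else expect t (dom_measure P t).

Lemma dom_node (R : realType) P n q (e0 e1 : R) (t0 t1 : proto R n) b l :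
  dom_measure P (Node q e0 e1 t0 t1) (b :: l) =
  if b then coef e1 (mu P e1 t1) (mu P e0 t0) (party_eqb q P) * dom_measure P t1 l
  else coef e0 (mu P e0 t0) (mu P e1 t1) (party_eqb q P) * dom_measure P t0 l.
Proof.
rewrite /coef /mu; case: b => /=; case: (e0 == 0); case: (e1 == 0);
  rewrite /= ?mul0r //; case: (_ == 1); rewrite ?mul1r //;
  case: (_ && _); rewrite ?mul1r ?mul0r //.
Qed.


Lemma expect_scale (R : realType) m (t : proto R m) (k : R) (M : measure R) :
  expect t (fun l => k * M l) = k * expect t M.
Proof.
elim: t M => [c|n q e0 e1 t0 IH0 t1 IH1] M //=.
rewrite /restr (IH0 (fun l => M (false :: l))) (IH1 (fun l => M (true :: l))).
rewrite /restr; ring.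
Qed.


Lemma coef_bounds (R : realType) (eb mub muo : R) c :
  0 <= eb <= 1 -> 0 <= muo -> 0 <= coef eb mub muo c <= 1.
Proof.
move=> /andP[hb1 hb2] ho; rewrite /coef.
have [_|nz0] := eqVneq eb 0; first by rewrite lexx ler01.
have [_|nz1] := eqVneq eb 1; first by rewrite ler01 lexx.
have -> : (0 < eb < 1) by rewrite lt_def nz0 hb1 lt_def eq_sym nz1 hb2.
case: c; rewrite /= ?lexx ?ler01 //; case: (lerP mub muo) => hlt; rewrite /= ?lexx ?ler01 //.
have mp : 0 < mub := le_lt_trans ho hlt.
apply/andP; split; first by apply: divr_ge0 => //; exact: ltW.
rewrite ler_pdivrMr // mul1r; exact: ltW.
Qed.



Lemma dom_chiA (R : realType) m (t : proto R m) l :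
  chi t l = false -> dom_measure PartyA t l = 0.
Proof.
elim: t l => [c|n q e0 e1 t0 IH0 t1 IH1] l; first by move=> /= ->.
case: l => [|b l] // h; rewrite dom_node; move: h => /=.
by case: b => h; rewrite ?IH0 ?IH1 ?mulr0.
Qed.

Lemma dom_chiB (R : realType) m (t : proto R m) l :
  chi t l = true -> dom_measure PartyB t l = 0.
Proof.
elim: t l => [c|n q e0 e1 t0 IH0 t1 IH1] l; first by move=> /= ->.
case: l => [|b l] // h; rewrite dom_node; move: h => /=.
by case: b => h; rewrite ?IH0 ?IH1 ?mulr0.
Qed.

Lemma dom_bounds (R : realType) P m (t : proto R m) :
  rv t -> forall l, 0 <= dom_measure P t l <= 1.
Proof.
elim: t => [c|n q e0 e1 t0 IH0 t1 IH1].
  by move=> _ l; case: P; case: c => /=; rewrite ?lexx ?ler01.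
move=> [h0 h1 h2 v0 v1] [|b l]; first by rewrite /= lexx ler01.
have mu0 : 0 <= mu P e0 t0.
  rewrite /mu; have [//|nz] := eqVneq e0 0; apply: expect_ge0; first exact: v0.
  by move=> l'; case/andP: (IH0 (v0 nz) l').
have mu1 : 0 <= mu P e1 t1.
  rewrite /mu; have [//|nz] := eqVneq e1 0; apply: expect_ge0; first exact: v1.
  by move=> l'; case/andP: (IH1 (v1 nz) l').
rewrite dom_node; case: b.
  have [E|nz] := eqVneq e1 0; first by rewrite /coef E eqxx mul0r lexx ler01.
  have /andP[c1 c2] : 0 <= coef e1 (mu P e1 t1) (mu P e0 t0) (party_eqb q P) <= 1.
    by apply: coef_bounds => //; apply/andP; split => //; lra.
  have /andP[d1 d2] := IH1 (v1 nz) l.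
  rewrite mulr_ge0 //=; rewrite -[leRHS]mulr1; exact: ler_pM.
have [E|nz] := eqVneq e0 0; first by rewrite /coef E eqxx mul0r lexx ler01.
have /andP[c1 c2] : 0 <= coef e0 (mu P e0 t0) (mu P e1 t1) (party_eqb q P) <= 1.
  by apply: coef_bounds => //; apply/andP; split => //; lra.
have /andP[d1 d2] := IH0 (v0 nz) l.
rewrite mulr_ge0 //=; rewrite -[leRHS]mulr1; exact: ler_pM.
Qed.

Definition other (P : party) := match P with PartyA => PartyB | PartyB => PartyA end.
Definition hP (R : realType) (P : party) (x : R) : R := if P is PartyA then x else 1 - x.

Lemma party_other q P : party_eqb q (other P) = ~~ party_eqb q P.
Proof. by case: q; case: P. Qed.

Lemma expect_node (R : realType) n q (e0 e1 : R) (t0 t1 : proto R n) M :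
  expect (Node q e0 e1 t0 t1) M = e0 * expect t0 (restr M false) + e1 * expect t1 (restr M true).
Proof. by []. Qed.

Lemma attack_node (R : realType) P S n q (e0 e1 : R) (t0 t1 : proto R n) :
  attack_out P S (Node q e0 e1 t0 t1) =
  if party_eqb q P then
    (if S [::] then attack_out P (sshift S true) t1 else attack_out P (sshift S false) t0)
  else e0 * attack_out P (sshift S false) t0 + e1 * attack_out P (sshift S true) t1.
Proof. by []. Qed.

Lemma valid_node (R : realType) P S n q (e0 e1 : R) (t0 t1 : proto R n) :
  valid_attack P S (Node q e0 e1 t0 t1) =
      if party_eqb q P then
        (if S [::] then e1 != 0 /\ valid_attack P (sshift S true) t1
                   else e0 != 0 /\ valid_attack P (sshift S false) t0)
      else (e0 != 0 -> valid_attack P (sshift S false) t0) /\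
           (e1 != 0 -> valid_attack P (sshift S true) t1).
Proof. by []. Qed.

Lemma expect_dom_node (R : realType) P n q (e0 e1 : R) (t0 t1 : proto R n) :
  expect (Node q e0 e1 t0 t1) (dom_measure P (Node q e0 e1 t0 t1)) =
  e0 * (coef e0 (mu P e0 t0) (mu P e1 t1) (party_eqb q P) * expect t0 (dom_measure P t0)) +
  e1 * (coef e1 (mu P e1 t1) (mu P e0 t0) (party_eqb q P) * expect t1 (dom_measure P t1)).
Proof.
rewrite expect_node -!expect_scale.
have -> : restr (dom_measure P (Node q e0 e1 t0 t1)) false =
  (fun l => coef e0 (mu P e0 t0) (mu P e1 t1) (party_eqb q P) * dom_measure P t0 l).
  by apply: funext => l; rewrite /restr dom_node.
have -> : restr (dom_measure P (Node q e0 e1 t0 t1)) true =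
  (fun l => coef e1 (mu P e1 t1) (mu P e0 t0) (party_eqb q P) * dom_measure P t1 l).
  by apply: funext => l; rewrite /restr dom_node.
by [].
Qed.

Lemma coef_true (R : realType) (e a b E : R) :
  0 <= e <= 1 -> e * (coef e a b true * E) = e * E.
Proof.
move=> /andP[h1 h2]; rewrite /coef.
have [->|nz0] := eqVneq e 0; first by rewrite !mul0r.
have [_|nz1] := eqVneq e 1; first by rewrite mul1r.
have -> : (0 < e < 1) by rewrite lt_def nz0 h1 lt_def eq_sym nz1 h2.
by rewrite /= mul1r.
Qed.

Lemma coef_min (R : realType) (e E0 E1 : R) :
  0 < e < 1 -> 0 <= E1 ->
  coef e E0 E1 false * E0 = (if E0 <= E1 then E0 else E1).
Proof.
move=> he hE1; rewrite /coef he.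
have /andP[p1 p2] := he.
rewrite gt_eqF // lt_eqF //=.
case: lerP => h; first by rewrite mul1r.
rewrite divfK //; apply: lt0r_neq0; exact: le_lt_trans hE1 h.
Qed.

Lemma hP_comb (R : realType) P (e0 e1 x y : R) :
  e0 + e1 = 1 -> hP P (e0 * x + e1 * y) = e0 * hP P x + e1 * hP P y.
Proof. by move=> h; case: P => //=; rewrite !mulrBr !mulr1; lra. Qed.

Lemma term_le (R : realType) (e E h : R) :
  0 <= e -> (e != 0 -> E <= h) -> e * E <= e * h.
Proof.
move=> he hh; have [->|nz] := eqVneq e 0; first by rewrite !mul0r.
by apply: ler_wpM2l => //; apply: hh.
Qed.

Lemma term_eq (R : realType) (e E h : R) :
  (e != 0 -> E = h) -> e * E = e * h.
Proof.
move=> hh; have [->|nz] := eqVneq e 0; first by rewrite !mul0r.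
by rewrite hh.
Qed.

Lemma conv_le (R : realType) (e0 e1 a b c : R) :
  0 <= e0 -> 0 <= e1 -> e0 + e1 = 1 -> a <= c -> b <= c -> e0 * a + e1 * b <= c.
Proof.
move=> h0 h1 h2 ha hb.
have := ler_wpM2l h0 ha; have := ler_wpM2l h1 hb.
move=> u v; have -> : c = e0 * c + e1 * c by rewrite -mulrDl h2 mul1r.
exact: lerD.
Qed.

Definition Sc (S0 S1 : strategy) (c : bool) : strategy :=
  fun u => match u with [::] => c | b :: u' => if b then S1 u' else S0 u' end.

Lemma dom_best (R : realType) P m (t : proto R m) : rv t ->
  (forall S, valid_attack (other P) S t ->
     expect t (dom_measure P t) <= hP P (attack_out (other P) S t)) /\
  exists S, valid_attack (other P) S t /\
     hP P (attack_out (other P) S t) = expect t (dom_measure P t).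
Proof.
elim: t => [c|n q e0 e1 t0 IH0 t1 IH1].
  move=> _; split.
    by move=> S _; case: P; case: c => /=; rewrite ?subrr ?subr0 lexx.
  by exists (fun _ => false); split => //; case: P; case: c => /=; rewrite ?subrr ?subr0.
move=> [h0 h1 h2 v0 v1].
set E0 := expect t0 (dom_measure P t0).
set E1 := expect t1 (dom_measure P t1).
have G0 : e0 != 0 -> 0 <= E0.
  move=> nz; apply: expect_ge0; first exact: v0.
  by move=> l; case/andP: (dom_bounds P (v0 nz) l).
have G1 : e1 != 0 -> 0 <= E1.
  move=> nz; apply: expect_ge0; first exact: v1.
  by move=> l; case/andP: (dom_bounds P (v1 nz) l).
have [S0 HS0] : exists S0, e0 != 0 -> valid_attack (other P) S0 t0 /\
    hP P (attack_out (other P) S0 t0) = E0.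
  have [_|nz] := eqVneq e0 0; first by exists (fun _ => false).
  by have [_ [S HS]] := IH0 (v0 nz); exists S.
have [S1 HS1] : exists S1, e1 != 0 -> valid_attack (other P) S1 t1 /\
    hP P (attack_out (other P) S1 t1) = E1.
  have [_|nz] := eqVneq e1 0; first by exists (fun _ => false).
  by have [_ [S HS]] := IH1 (v1 nz); exists S.
have L0 : e0 != 0 -> forall S, valid_attack (other P) S t0 -> E0 <= hP P (attack_out (other P) S t0).
  by move=> nz; case: (IH0 (v0 nz)).
have L1 : e1 != 0 -> forall S, valid_attack (other P) S t1 -> E1 <= hP P (attack_out (other P) S t1).
  by move=> nz; case: (IH1 (v1 nz)).
have b0 : 0 <= e0 <= 1 by rewrite h0 /=; lra.
have b1 : 0 <= e1 <= 1 by rewrite h1 /=; lra.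
rewrite expect_dom_node -/E0 -/E1.
case hq : (party_eqb q P).
  rewrite !coef_true //; split.
    move=> S; rewrite valid_node attack_node party_other hq /= => -[V0 V1].
    rewrite hP_comb //; apply: lerD; apply: term_le => // nz.
      exact: L0 nz _ (V0 nz).
    exact: L1 nz _ (V1 nz).
  exists (Sc S0 S1 false); rewrite valid_node attack_node party_other hq /=.
  change (sshift (Sc S0 S1 false) false) with S0.
  change (sshift (Sc S0 S1 false) true) with S1.
  split; first by split => nz; case: (HS0 nz) || case: (HS1 nz).
  rewrite hP_comb //; congr (_ + _); apply: term_eq => nz.
    by case: (HS0 nz).
  by case: (HS1 nz).
have hq' : party_eqb q (other P) = true by rewrite party_other hq.
have [z0|nz0] := eqVneq e0 0.
  have e1one : e1 = 1 by rewrite z0 add0r in h2.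
  have nz1 : e1 != 0 by rewrite e1one oner_neq0.
  have -> : e0 * (coef e0 (mu P e0 t0) (mu P e1 t1) false * E0) = 0 by rewrite z0 mul0r.
  have -> : coef e1 (mu P e1 t1) (mu P e0 t0) false = 1 by rewrite /coef e1one oner_eq0 eqxx.
  rewrite add0r e1one !mul1r; split.
    move=> S; rewrite valid_node attack_node hq'.
    case: (S [::]) => -[nz V]; first exact: L1.
    by rewrite z0 eqxx in nz.
  exists (Sc S0 S1 true); rewrite valid_node attack_node hq' /=.
  change (sshift (Sc S0 S1 true) true) with S1.
  by case: (HS1 nz1) => V ->; rewrite oner_neq0.
have [z1|nz1] := eqVneq e1 0.
  have e0one : e0 = 1 by rewrite z1 addr0 in h2.
  have -> : e1 * (coef e1 (mu P e1 t1) (mu P e0 t0) false * E1) = 0 by rewrite z1 mul0r.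
  have -> : coef e0 (mu P e0 t0) (mu P e1 t1) false = 1 by rewrite /coef e0one oner_eq0 eqxx.
  rewrite addr0 e0one !mul1r; split.
    move=> S; rewrite valid_node attack_node hq'.
    case: (S [::]) => -[nz V]; last exact: L0.
    by rewrite z1 eqxx in nz.
  exists (Sc S0 S1 false); rewrite valid_node attack_node hq' /=.
  change (sshift (Sc S0 S1 false) false) with S0.
  by case: (HS0 nz0) => V ->; rewrite oner_neq0.
have m0 : mu P e0 t0 = E0 by rewrite /mu (negbTE nz0).
have m1 : mu P e1 t1 = E1 by rewrite /mu (negbTE nz1).
have n0 : e0 != 1 by apply: contra nz1 => /eqP E; apply/eqP; lra.
have n1 : e1 != 1 by apply: contra nz0 => /eqP E; apply/eqP; lra.
have i0 : 0 < e0 < 1.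
  by rewrite lt_def nz0 h0 /= lt_def eq_sym n0 /=; lra.
have i1 : 0 < e1 < 1.
  by rewrite lt_def nz1 h1 /= lt_def eq_sym n1 /=; lra.
rewrite m0 m1 !coef_min //; try by [apply: G0 | apply: G1].
have g0 := G0 nz0; have g1 := G1 nz1.
split.
  move=> S; rewrite valid_node attack_node hq'.
  case: (S [::]) => -[nz V].
    apply: le_trans (L1 nz _ V); apply: conv_le => //;
    by case: (lerP E0 E1) => ?; case: (lerP E1 E0) => ?; lra.
  apply: le_trans (L0 nz _ V); apply: conv_le => //;
  by case: (lerP E0 E1) => ?; case: (lerP E1 E0) => ?; lra.
case: (lerP E0 E1) => hE.
  exists (Sc S0 S1 false); rewrite valid_node attack_node hq' /=.
  change (sshift (Sc S0 S1 false) false) with S0.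
  case: (HS0 nz0) => V ->; split => //.
  case: (lerP E1 E0) => h; last by rewrite -mulrDl h2 mul1r.
  have -> : E1 = E0 by apply: le_anti; rewrite h hE.
  by rewrite -mulrDl h2 mul1r.
exists (Sc S0 S1 true); rewrite valid_node attack_node hq' /=.
change (sshift (Sc S0 S1 true) true) with S1.
case: (HS1 nz1) => V ->; split => //.
by rewrite (ltW hE) -mulrDl h2 mul1r.
Qed.

Lemma sup_eq_max (R : realType) (E : set R) v :
  E v -> (forall x, E x -> x <= v) -> sup E = v.
Proof.
move=> Ev ub; apply: le_anti; apply/andP; split.
  by apply: ge_sup; [exists v | move=> x Ex; exact: ub].
by apply: (ub_le_sup (E:=E)) => //; exists v => x Ex; exact: ub.
Qed.

Lemma BestB_dom (R : realType) m (t : proto R m) :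
  rv t -> Best PartyB t = 1 - expect t (dom_measure PartyA t).
Proof.
move=> h; have [L [S [V HS]]] := dom_best PartyA h.
apply: sup_eq_max; first by exists S; split => //; rewrite -HS.
move=> x [S' [V' ->]]; have := L S' V'; rewrite /hP /=; lra.
Qed.

Lemma BestA_dom (R : realType) m (t : proto R m) :
  rv t -> Best PartyA t = 1 - expect t (dom_measure PartyB t).
Proof.
move=> h; have [L [S [V HS]]] := dom_best PartyB h.
apply: sup_eq_max; first by exists S; split => //; rewrite -HS /hP /=; lra.
move=> x [S' [V' ->]]; have := L S' V'; rewrite /hP /=; lra.
Qed.

Lemma telescope (R : realType) (d : nat -> R) n :
  \sum_(j < n) d j * \prod_(i < j) (1 - d i) = 1 - \prod_(i < n) (1 - d i).
Proof.
elim: n => [|n IH]; first by rewrite !big_ord0 subrr.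
rewrite big_ord_recr /= IH big_ord_recr /=; ring.
Qed.

Lemma big_rec (R : realType) (a c : nat -> R) (k n : nat) :
  \sum_(j < n.+1) a (k + j)%N * \prod_(i < j) c (k + i)%N =
  a k + c k * \sum_(j < n) a (k.+1 + j)%N * \prod_(i < j) c (k.+1 + i)%N.
Proof.
rewrite big_ord_recl /= addn0 big_ord0 mulr1; congr (_ + _).
rewrite big_distrr; apply: eq_bigr => j _ /=.
rewrite big_ord_recl /= addn0 /bump /= add1n addnS -addSn.
rewrite mulrCA; congr (_ * (_ * _)).
by apply: eq_bigr => i _; rewrite /bump /= add1n addnS -addSn.
Qed.

Lemma PiA0 (R : realType) m (t : proto R m) : PiA t 0 = Some t.
Proof. by []. Qed.

Lemma PiAS (R : realType) m (t : proto R m) k :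
  PiA t k.+1 = cond (PiB t k) (dom_measure_o PartyB (PiB t k)).
Proof. by []. Qed.

Lemma PiBE (R : realType) m (t : proto R m) k :
  PiB t k = cond (PiA t k) (dom_measure_o PartyA (PiA t k)).
Proof. by case: k. Qed.

Lemma cond_props (R : realType) m (t : proto R m) P (o : option (proto R m)) :
  (forall u, o = Some u -> rv u /\ forall l, chi u l = chi t l) ->
  forall v, cond o (dom_measure_o P o) = Some v -> rv v /\ forall l, chi v l = chi t l.
Proof.
case: o => [u|] // /(_ u erefl) [hu hc] v /=.
case: eqP => // /eqP hE [<-]; split.
  by apply: cond_rv => // l; apply: dom_bounds.
by move=> l; rewrite cond_chi.
Qed.

Lemma seq_props (R : realType) m (t : proto R m) : rv t -> forall j,
  (forall u, PiA t j = Some u -> rv u /\ forall l, chi u l = chi t l) /\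
  (forall u, PiB t j = Some u -> rv u /\ forall l, chi u l = chi t l).
Proof.
move=> ht; elim=> [|j [IHA IHB]].
  have HA : forall u, PiA t 0 = Some u -> rv u /\ forall l, chi u l = chi t l.
    by rewrite PiA0 => u [<-].
  split => //; rewrite PiBE; exact: cond_props.
have HA : forall u, PiA t j.+1 = Some u -> rv u /\ forall l, chi u l = chi t l.
  rewrite PiAS; exact: cond_props.
split => //; rewrite PiBE; exact: cond_props.
Qed.

Definition Xf (R : realType) m (t : proto R m) j l := dom_measure_o PartyA (PiA t j) l.
Definition Ff (R : realType) m (t : proto R m) k n : measure R := fun l =>
  \sum_(j < n) Xf t (k + j)%N l * \prod_(i < j) (1 - Xf t (k + i)%N l).
Definition Sf (R : realType) m (t : proto R m) k n : R :=
  \sum_(j < n) alpha t (k + j)%N * \prod_(i < j) ((1 - beta t (k + i)%N) * (1 - alpha t (k + i)%N)).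

Lemma Ff_rec (R : realType) m (t : proto R m) k n :
  Ff t k n.+1 = fun l => Xf t k l + (1 - Xf t k l) * Ff t k.+1 n l.
Proof.
apply: funext => l; rewrite /Ff.
exact: (big_rec (fun j => Xf t j l) (fun i => 1 - Xf t i l)).
Qed.

Lemma Sf_rec (R : realType) m (t : proto R m) k n :
  Sf t k n.+1 = alpha t k + ((1 - beta t k) * (1 - alpha t k)) * Sf t k.+1 n.
Proof.
rewrite /Sf.
exact: (big_rec (fun j => alpha t j) (fun i => (1 - beta t i) * (1 - alpha t i))).
Qed.

Lemma Xf_bounds (R : realType) m (t : proto R m) j l : rv t -> 0 <= Xf t j l <= 1.
Proof.
move=> ht; rewrite /Xf; case E: (PiA t j) => [u|] /=; last by rewrite lexx ler01.
have [[hu _] _] := (seq_props ht j, E).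
by apply: dom_bounds; case: (seq_props ht j) => /(_ u E) [].
Qed.

Lemma Xf_chi (R : realType) m (t : proto R m) j l : rv t -> chi t l = false -> Xf t j l = 0.
Proof.
move=> ht hc; rewrite /Xf; case E: (PiA t j) => [u|] //=.
case: (seq_props ht j) => /(_ u E) [_ hch] _.
by apply: dom_chiA; rewrite hch.
Qed.

Lemma Ff_chi (R : realType) m (t : proto R m) k n l : rv t -> chi t l = false -> Ff t k n l = 0.
Proof.
move=> ht hc; rewrite /Ff big1 // => j _; by rewrite Xf_chi // mul0r.
Qed.

Lemma F_main (R : realType) m (t : proto R m) : rv t -> forall n k u,
  PiA t k = Some u -> expect u (Ff t k n) = Sf t k n.
Proof.
move=> ht; elim=> [|n IH] k u hk.
  rewrite /Ff /Sf big_ord0.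
  have -> : (fun l : seq bool => \sum_(j < 0) Xf t (k + j)%N l * \prod_(i < j) (1 - Xf t (k + i)%N l)) = (fun _ => 0).
    by apply: funext => l; rewrite big_ord0.
  exact: expect0.
case: (seq_props ht k) => /(_ u hk) [hu hcu] HB.
rewrite Ff_rec Sf_rec expect_add.
have Xk : Xf t k = dom_measure PartyA u by rewrite /Xf hk.
rewrite Xk.
have ak : alpha t k = expect u (dom_measure PartyA u).
  by rewrite /alpha hk /= BestB_dom // opprB addrC subrK.
rewrite -ak; congr (_ + _).
have hbu : forall l, 0 <= dom_measure PartyA u l <= 1 by move=> l; apply: dom_bounds.
have [E1|En] := eqVneq (expect u (dom_measure PartyA u)) 1.
  have -> : alpha t k = 1 by rewrite ak.
  rewrite subrr mulr0 mul0r.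
  apply: expect_one_zero => // l; by case/andP: (hbu l).
rewrite -cond_expect // -ak.
have hPB : PiB t k = Some (cond_aux true u (dom_measure PartyA u)).
  by rewrite PiBE hk /= (negbTE En).
set v := cond_aux true u (dom_measure PartyA u) in hPB *.
have [hv hcv] := HB v hPB.
suff -> : expect v (Ff t k.+1 n) = (1 - beta t k) * Sf t k.+1 n by ring.
have bk : beta t k = expect v (dom_measure PartyB v).
  by rewrite /beta hPB /= BestA_dom // opprB addrC subrK.
have hbv : forall l, 0 <= dom_measure PartyB v l <= 1 by move=> l; apply: dom_bounds.
have -> : Ff t k.+1 n = fun l => (1 - dom_measure PartyB v l) * Ff t k.+1 n l.
  apply: funext => l; case hc: (chi t l).
    by rewrite dom_chiB ?subr0 ?mul1r // hcv.
  by rewrite Ff_chi // mulr0.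
have [E2|En2] := eqVneq (expect v (dom_measure PartyB v)) 1.
  have -> : beta t k = 1 by rewrite bk.
  rewrite subrr mul0r.
  apply: expect_one_zero => // l; by case/andP: (hbv l).
rewrite -cond_expect // -bk.
have hPA : PiA t k.+1 = Some (cond_aux true v (dom_measure PartyB v)).
  by rewrite PiAS hPB /= (negbTE En2).
by rewrite (IH k.+1 _ hPA).
Qed.

Theorem lemma3p24 (R : realType) (m : nat) (Pi : proto R m) (z : nat) :
  valid_proto Pi ->
  (forall l : seq bool, size l = m ->
     0 <= CA Pi z l <= 1 /\ (chi Pi l = false -> CA Pi z l = 0)) /\
  expect Pi (CA Pi z) =
    \sum_(j < z.+1) alpha Pi j *
       \prod_(t < j) ((1 - beta Pi t) * (1 - alpha Pi t)).
Proof.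
move=> /valid_rv ht; split.
  move=> l _; split.
    have HT : CA Pi z l = 1 - \prod_(i < z.+1) (1 - Xf Pi i l) := telescope (fun j => Xf Pi j l) z.+1.
    rewrite HT subr_ge0 lerBlDr lerDl.
    apply/andP; split.
      apply: prodr_ile1 => i _; have /andP[a b] := Xf_bounds i l ht.
      by rewrite subr_ge0 b lerBlDr lerDl a.
    apply: prodr_ge0 => i _; have /andP[a b] := Xf_bounds i l ht.
    by rewrite subr_ge0.
  move=> hc; rewrite /CA big1 // => j _.
  by rewrite -/(Xf Pi j l) (Xf_chi j ht hc) mul0r.
have := F_main ht z.+1 (PiA0 Pi).
rewrite /Ff /Sf.
have -> : (fun l => \sum_(j < z.+1) Xf Pi (0 + j)%N l * \prod_(i < j) (1 - Xf Pi (0 + i)%N l)) = CA Pi z.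
  by [].
by [].
Qed.
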